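(* There is a polynomial-time algorithm that, given a temporal graph $\mathcal{G}$ and a single source vertex $v$, computes a solution of \textsc{ReachFast} with source set $\{v\}$ of minimum value whenever a solution exists. No bound is placed on the number of delays or on the total delay.
   Context: A temporal graph $\mathcal{G}=\langle G,(E_1,\dots,E_{t_{\max}})\rangle$ consists of a static graph $G=(V,E)$ and edge sets $E_i\subseteq E$ with $E=\bigcup_i E_i$. An edge $e$ has label $i$ if $e\in E_i$, and an edge may have several labels. A temporal path from $v_1$ to $v_{m+1}$ is a sequence $(v_jv_{j+1},t_j)_{j=1}^m$ with $v_jv_{j+1}\in E_{t_j}$ and $t_1<\dots<t_m$; its arrival time is $t_m$. The reaching time $\mathrm{reachtime}(v,\mathcal{G})$ is the least $t$ such that $v$ reaches every vertex by a temporal path with arrival time at most $t$ ($v$ reaches itself at time $0$), and it is $\infty$ otherwise. Delaying a label $i$ of an edge by a positive integer $\delta$ replaces it by $i+\delta$; the new label may exceed $t_{\max}$. A solution of \textsc{ReachFast} with source set $S$ is a temporal graph $\mathcal{G}'$ obtained from $\mathcal{G}$ by delaying any number of labels (each by any amount) such that every source reaches every vertex. Its value is $\max_{s\in S}\mathrm{reachtime}(s,\mathcal{G}')$. *)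

(* Defs.v *)
From mathcomp Require Import all_boot.
Set Implicit Arguments. Unset Strict Implicit. Unset Printing Implicit Defensive.

(* A temporal graph on vertex set {0,...,n-1} is given by its set of
   (edge, label) occurrences: a triple (u, w, t) with u < w < n means that
   the edge {u,w} carries label t (i.e. {u,w} \in E_t).  The static edge set
   E is the set of edges occurring in some triple (E = \bigcup_i E_i).
   The list is read as a SET (duplicates are irrelevant). *)
Definition label := (nat * nat * nat)%type.

Definition wf_tgraph (n : nat) (L : seq label) : Prop :=
  forall u w t, (u, w, t) \in L -> [/\ u < w, w < n & 0 < t].

Definition has_label (L : seq label) (x y t : nat) : Prop :=
  (x, y, t) \in L \/ (y, x, t) \in L.

Fixpoint is_tpath (L : seq label) (x prev : nat) (p : seq (nat * nat)) (y : nat)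
  : Prop :=
  match p with
  | [::] => x = y
  | (z, t) :: p' => [/\ has_label L x z t, prev < t & is_tpath L z t p' y]
  end.

(* arrival time (0 for the empty path, i.e. x reaches itself at time 0) *)
Definition arrival (p : seq (nat * nat)) : nat := last 0 (map snd p).

Definition reaches_by (L : seq label) (x y T : nat) : Prop :=
  exists p, is_tpath L x 0 p y /\ arrival p <= T.

Definition reaches_all_by (n : nat) (L : seq label) (x T : nat) : Prop :=
  forall y, y < n -> reaches_by L x y T.

Definition reachtime_is (n : nat) (L : seq label) (x t : nat) : Prop :=
  reaches_all_by n L x t /\ forall t', reaches_all_by n L x t' -> t <= t'.

(* L' is obtained from L by delaying labels: each label occurrence (e,i) is
   replaced by (e, i + d(e,i)), with d(e,i) = 0 meaning "not delayed" and
   d(e,i) > 0 meaning "delayed by d(e,i)".  Label sets are sets (=i). *)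
Definition delayed_from (L L' : seq label) : Prop :=
  exists d : label -> nat, L' =i [seq (x.1.1, x.1.2, x.2 + d x) | x <- L].

Definition reachfast_solution (n : nat) (L : seq label) (v : nat) (L' : seq label)
  : Prop :=
  delayed_from L L' /\ exists T, reaches_all_by n L' v T.

Definition reachfast_optimal (n : nat) (L : seq label) (v : nat) (L' : seq label)
  : Prop :=
  reachfast_solution n L v L' /\
  exists t, reachtime_is n L' v t /\
    forall L'' t'', reachfast_solution n L v L'' -> reachtime_is n L'' v t'' ->
      t <= t''.

(* Registers/memory M : nat -> nat, indirect addressing, addition and
   truncated subtraction (no multiplication); each instruction costs 1.
   This model is polynomially equivalent to Turing machines. *)
Inductive instr : Type :=
| IConst of nat & nat
| IAdd of nat & nat & nat
| ISub of nat & nat & nat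
| ILoad of nat & nat
| IStore of nat & nat
| IJz of nat & nat
| IHalt.

Definition upd (M : nat -> nat) (r x : nat) : nat -> nat :=
  fun i => if i == r then x else M i.

(* one step; None = halted (IHalt, or pc outside the program) *)
Definition step (P : seq instr) (s : nat * (nat -> nat))
  : option (nat * (nat -> nat)) :=
  let: (pc, M) := s in
  match nth IHalt P pc with
  | IConst r c => Some (pc.+1, upd M r c)
  | IAdd r a b => Some (pc.+1, upd M r (M a + M b))
  | ISub r a b => Some (pc.+1, upd M r (M a - M b))
  | ILoad r a => Some (pc.+1, upd M r (M (M a)))
  | IStore a b => Some (pc.+1, upd M (M a) (M b))
  | IJz a l => Some (if M a == 0 then l else pc.+1, M)
  | IHalt => None
  end.

Fixpoint exec (P : seq instr) (fuel : nat) (s : nat * (nat -> nat))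
  : option (nat -> nat) :=
  match fuel with
  | 0 => None
  | f.+1 => match step P s with
            | None => Some s.2
            | Some s' => exec P f s'
            end
  end.

Definition init_state (input : seq nat) : nat * (nat -> nat) :=
  (0, fun i => nth 0 input i).

(* input size: total binary length of the input words (each word >= 1 bit) *)
Definition input_size (input : seq nat) : nat :=
  \sum_(x <- input) (trunc_log 2 x).+1.

Definition encode_instance (n v : nat) (L : seq label) : seq nat :=
  [:: n, v, size L & flatten [seq [:: x.1.1; x.1.2; x.2] | x <- L]].

Definition decode_output (M : nat -> nat) : seq label :=
  [seq (M (1 + 3 * j), M (2 + 3 * j), M (3 + 3 * j)) | j <- iota 0 (M 0)].

(* Main.v *)
Require Import Defs.
From mathcomp Require Import all_boot zify.
Set Implicit Arguments. Unset Strict Implicit. Unset Printing Implicit Defensive.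

Definition state := (nat * (nat -> nat))%type.

Fixpoint steps (P : seq instr) (k : nat) (s : state) : option state :=
  match k with
  | 0 => Some s
  | k.+1 => if step P s is Some s' then steps P k s' else None
  end.

Definition reach P s s' n := steps P n s = Some s'.

Lemma reach0 P s : reach P s s 0. Proof. by []. Qed.

Lemma reach_trans P s s1 s2 a b :
  reach P s s1 a -> reach P s1 s2 b -> reach P s s2 (a + b).
Proof.
elim: a s => [|a IH] s /=; first by move=> [->].
rewrite /reach /=; case: (step P s) => // s' h1 h2; exact: IH.
Qed.

Lemma exec_reach P s s' k f :
  reach P s s' k -> exec P (k + f) s = exec P f s'.
Proof.
elim: k s => [|k IH] s /=; first by move=> [->].
rewrite /reach /=; case: (step P s) => // s' h; exact: IH.
Qed.

Lemma exec_halt P s f : step P s = None -> exec P f.+1 s = Some s.2.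
Proof. by move=> /= ->. Qed.

Lemma upd_eq M r x i : i = r -> upd M r x i = x.
Proof. by move=> ->; rewrite /upd eqxx. Qed.
Lemma upd_ne M r x i : i <> r -> upd M r x i = M i.
Proof. by move=> /eqP h; rewrite /upd (negbTE h). Qed.

Global Opaque upd.

Ltac rd := repeat match goal with
 | |- context [upd ?M ?r ?x ?i] =>
   lazymatch i with context [upd] => fail | _ =>
   lazymatch r with context [upd] => fail | _ =>
     first [ rewrite (@upd_ne M r x i); [|discriminate]
           | rewrite (@upd_eq M r x i); [|reflexivity]
           | rewrite (@upd_eq M r x i); [|by lia]
           | rewrite (@upd_ne M r x i); [|by lia] ] end end
 end.

Lemma ex_step P (Q : (nat -> nat) -> Prop) s s1 pc' B :
  step P s = Some s1 ->
  (exists n M', reach P s1 (pc', M') n /\ n.+1 <= B /\ Q M') ->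
  exists n M', reach P s (pc', M') n /\ n <= B /\ Q M'.
Proof.
move=> hs [n [M' [h1 [h2 h3]]]]; exists n.+1, M'; split=> //.
by rewrite /reach /= hs.
Qed.

Lemma ex_done P (Q : (nat -> nat) -> Prop) pc M B :
  0 <= B -> Q M -> exists n M', reach P (pc, M) (pc, M') n /\ n <= B /\ Q M'.
Proof. by move=> h q; exists 0, M. Qed.

Definition relax_code (b : nat) : seq instr :=
 [:: IAdd 14 4 11; ILoad 15 14; IJz 15 (b+12); ISub 18 10 15;
     IAdd 16 15 18; IAdd 16 16 1; IAdd 14 4 12; ILoad 17 14;
     IJz 17 (b+11); ISub 18 17 16; ISub 16 17 18; IStore 14 16].

Definition fill_code : seq instr :=
  [seq IAdd c (25 + (c.-1 %% 3)) 13 | c <- [:: 1;2;3;4;5;6;7;8;9;10;11;12;14;15;16;17;18;19;20;21;22;23;24;13]].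

Definition prog : seq instr :=
 [:: IJz 2 139; IAdd 0 2 2; IAdd 0 0 0; IAdd 0 0 0; IAdd 0 0 0; IAdd 0 0 0;
     IStore 0 1; IConst 1 1; IAdd 0 0 1; IStore 0 2; IAdd 0 0 1; IStore 0 3;
     IAdd 0 0 1; IStore 0 4; IAdd 0 0 1; IStore 0 5;
  (*16*) IConst 3 6; IAdd 4 2 2; IAdd 4 4 2; IConst 5 3; ISub 4 4 5;
  (*21*) IJz 4 29; IAdd 0 0 1; ILoad 5 3; IStore 0 5; IAdd 3 3 1; ISub 4 4 1;
     IConst 5 0; IJz 5 21;
  (*29*) IConst 13 0; IAdd 3 2 2; IAdd 3 3 3; IAdd 3 3 3; IAdd 3 3 3; IAdd 3 3 3;
  (*35*) IConst 18 2; IAdd 3 3 18; IAdd 4 3 3; ISub 14 3 18; ILoad 15 14;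
  (*40*) IAdd 14 4 15; IStore 14 1; IAdd 5 2 2; IAdd 5 5 1;
  (*44*) IJz 5 86; IAdd 7 3 13; IAdd 6 2 13;
  (*47*) IJz 6 84; ILoad 8 7; IAdd 7 7 1; ILoad 9 7; IAdd 7 7 1; ILoad 10 7; IAdd 7 7 1;
  (*54*) IAdd 11 8 13; IAdd 12 9 13 ] ++ relax_code 56 ++
 [:: (*68*) IAdd 11 9 13; IAdd 12 8 13 ] ++ relax_code 70 ++
 [:: (*82*) ISub 6 6 1; IJz 13 47;
  (*84*) ISub 5 5 1; IJz 13 44;
  (*86*) IAdd 7 3 13; IAdd 6 2 13; IConst 19 25;
  (*89*) IJz 6 112; ILoad 8 7; IAdd 7 7 1; ILoad 9 7; IAdd 7 7 1; ILoad 10 7; IAdd 7 7 1;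
  (*96*) IAdd 14 4 8; ILoad 15 14; IAdd 14 4 9; ILoad 17 14;
  (*100*) ISub 18 15 17; ISub 18 15 18; ISub 18 18 10; IAdd 18 10 18;
  (*104*) IStore 19 8; IAdd 19 19 1; IStore 19 9; IAdd 19 19 1; IStore 19 18; IAdd 19 19 1;
  (*110*) ISub 6 6 1; IJz 13 89;
  (*112*) IConst 18 8; IAdd 0 2 18] ++ fill_code ++
 [:: (*138*) IHalt; (*139*) IConst 0 0; IHalt].

Lemma prog_size : size prog = 141. Proof. by []. Qed.
Lemma prog_chk : [/\ nth IHalt prog 44 = IJz 5 86, nth IHalt prog 84 = ISub 5 5 1,
   nth IHalt prog 89 = IJz 6 112 & nth IHalt prog 139 = IConst 0 0].
Proof. by []. Qed.
Lemma prog_chk2 : [/\ nth IHalt prog 112 = IConst 18 8, nth IHalt prog 138 = IHalt, nth IHalt prog 68 = IAdd 11 9 13 & nth IHalt prog 82 = ISub 6 6 1].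
Proof. by []. Qed.

Lemma step_prog pc M : step prog (pc, M) = step prog (pc, M). Proof. by []. Qed.


Lemma ex_step' P (Q : (nat -> nat) -> Prop) s s1 pc' B :
  step P s = Some s1 -> 0 < B ->
  (exists n M', reach P s1 (pc', M') n /\ n <= B - 1 /\ Q M') ->
  exists n M', reach P s (pc', M') n /\ n <= B /\ Q M'.
Proof.
move=> hs hB [n [M' [h1 [h2 h3]]]]; exists n.+1, M'; split.
  by rewrite /reach /= hs.
split=> //; lia.
Qed.

Ltac st := eapply ex_step'; [reflexivity| lia |]; cbv beta iota; rd.
Ltac fin := apply ex_done; [lia|]; rd.

Definition relax_val (sx sz t : nat) :=
  if sx == 0 then sz else
  let c := sx + (t - sx) + 1 in
  if sz == 0 then c else sz - (sz - c).

Ltac rvt := rewrite /relax_val; do ?[case: eqP => ?]; try lia.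

Lemma relax_spec b M :
  (b = 56 \/ b = 70) ->
  M 4 >= 19 -> M 1 = 1 ->
  exists n M', reach prog (b, M) (b + 12, M') n /\ n <= 12 /\
   M' (M 4 + M 12) = relax_val (M (M 4 + M 11)) (M (M 4 + M 12)) (M 10) /\
   (forall a, a <> M 4 + M 12 -> a < 14 \/ 18 < a -> M' a = M a).
Proof.
move=> hb h4 h1; case: hb => ->; (st; st; st;
  case: eqP => hx; [ fin; split; [by rvt | by move=> a ha hr; rd] |];
  st; st; st; st; st; st; case: eqP => hz;
  [ st; fin; split; [by rvt | by move=> a ha hr; rd] |];
  st; st; st; fin; split; [by rvt | by move=> a ha hr; rd]).
Qed.


Definition relaxF (s : nat -> nat) x z t : nat -> nat :=
  fun y => if y == z then relax_val (s x) (s z) t else s y.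

Lemma relax_blk b M S (s : nat -> nat) x z t :
  (b = 56 \/ b = 70) -> M 4 = S -> 19 <= S -> M 1 = 1 -> M 11 = x -> M 12 = z ->
  M 10 = t -> (forall y, M (S + y) = s y) ->
  exists n M', reach prog (b, M) (b + 12, M') n /\ n <= 12 /\
    (forall y, M' (S + y) = relaxF s x z t y) /\
    (forall a, a < 14 \/ (18 < a < S) -> M' a = M a).
Proof.
move=> hb h4 hS h1 h11 h12 h10 hs.
have [|n [M' [r [hn [e fr]]]]] := relax_spec (M:=M) hb _ h1; first by lia.
exists n, M'; do 3 split => //.
- move=> y; rewrite /relaxF; case: eqP => [->|hy].
  + by rewrite -h4 -h12 e h4 h11 h12 h10 !hs.
  + rewrite fr; [by rewrite hs| |]; lia.
- move=> a ha; rewrite fr //; lia.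
Qed.

Definition flat (L : seq label) := flatten [seq [:: x.1.1; x.1.2; x.2] | x <- L].

Definition Base m (L : seq label) M (s : nat -> nat) :=
 [/\ M 1 = 1, M 2 = m, M 3 = 32*m+2, M 4 = 64*m+4 & [/\ M 13 = 0,
   forall i, i < 3*m -> M (32*m+2+i) = nth 0 (flat L) i & forall y, M (64*m+4+y) = s y]].

Definition rstep3 s u w t := relaxF (relaxF s u w t) w u t.

Lemma ex_block P (Q R : (nat->nat) -> Prop) pc1 pc2 pc3 M B b1 :
 (exists n M1, reach P (pc1,M) (pc2,M1) n /\ n <= b1 /\ R M1) ->
 b1 <= B ->
 (forall M1, R M1 -> exists n M', reach P (pc2,M1) (pc3,M') n /\ n <= B - b1 /\ Q M') ->
 exists n M', reach P (pc1,M) (pc3,M') n /\ n <= B /\ Q M'.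
Proof.
move=> [n1 [M1 [r1 [h1 q1]]]] hb /(_ _ q1) [n2 [M2 [r2 [h2 q2]]]].
exists (n1 + n2), M2; split; first exact: reach_trans r1 r2.
split => //; lia.
Qed.

Ltac rf H := match type of H with forall a, _ -> ?M a = _ =>
  repeat match goal with |- context [M ?a] => rewrite (H a); [|lia] end end.

Ltac jzf := rewrite ifF; [|apply/eqP; lia].
Ltac jzt := rewrite ifT; [|apply/eqP; lia].

Lemma edge_body m L M s j r : j < m -> Base m L M s -> M 5 = r -> M 6 = m - j ->
  M 7 = 32*m+2+3*j ->
  exists n M', reach prog (47,M) (47,M') n /\ n <= 40 /\
    Base m L M' (rstep3 s (nth 0 (flat L) (3*j)) (nth 0 (flat L) (3*j+1)) (nth 0 (flat L) (3*j+2)))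
    /\ M' 5 = r /\ M' 6 = m - j.+1 /\ M' 7 = 32*m+2+3*j.+1.
Proof.
move=> hj [h1 h2 h3 h4 [h13 htri hs]] h5 h6 h7.
set u := nth 0 (flat L) (3*j); set w := nth 0 (flat L) (3*j+1); set t := nth 0 (flat L) (3*j+2).
have r0 : M (M 7) = u by rewrite h7 htri //; lia.
have r1 : M (M 7 + M 1) = w.
  by rewrite h7 h1 (_ : 32*m+2+3*j+1 = 32*m+2+(3*j+1)) ?htri //; lia.
have r2 : M (M 7 + M 1 + M 1) = t.
  by rewrite h7 h1 (_ : 32*m+2+3*j+1+1 = 32*m+2+(3*j+2)) ?htri //; lia.
st. jzf. st. st. st. st. st. st. st. st.
eapply ex_block.
  apply: (relax_blk (b:=56) (S:=64*m+4) (s:=s) (x:=u) (z:=w) (t:=t)); first (by left);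
    try (by rd; rewrite ?r0 ?r1 ?r2 ?h13 ?addn0; lia).
  by move=> y; rd; rewrite hs.
  done.
move=> M2 [hs2 fr2].
st. rf fr2. rd. st. rf fr2. rd.
eapply ex_block.
  apply: (relax_blk (b:=70) (S:=64*m+4) (s:=relaxF s u w t) (x:=w) (z:=u) (t:=t)); first (by right);
    try (by rd; rf fr2; rd; rewrite ?r0 ?r1 ?r2 ?h13 ?addn0; lia).
  by move=> y; rd; rewrite hs2.
  done.
move=> M3 [hs3 fr3].
st. rf fr3. rd. rf fr2. rd.
st. rf fr3. rd. rf fr2. rd. jzt.
fin. rf fr3. rd. rf fr2. rd.
split; last by lia.
split; try (rd; rf fr3; rd; rf fr2; rd; lia).
split; first (rd; rf fr3; rd; rf fr2; rd; lia).
- move=> i hi; rd; rf fr3; rd; rf fr2; rd; exact: htri.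
- by move=> y; rd; rewrite hs3.
Qed.


Lemma ex_weak P (Q : (nat->nat) -> Prop) s pc B B' :
  (exists n M', reach P s (pc, M') n /\ n <= B' /\ Q M') -> B' <= B ->
  exists n M', reach P s (pc, M') n /\ n <= B /\ Q M'.
Proof. move=> [n [M' [h1 [h2 h3]]]] hb; exists n, M'; split=> //; split=> //; lia. Qed.

Fixpoint efold (L : seq label) (k j : nat) (s : nat -> nat) : nat -> nat :=
  match k with
  | 0 => s
  | k'.+1 => efold L k' j.+1
      (rstep3 s (nth 0 (flat L) (3*j)) (nth 0 (flat L) (3*j+1)) (nth 0 (flat L) (3*j+2)))
  end.

Lemma edge_loop m L r : forall k j M s, k = m - j -> j <= m -> Base m L M s -> M 5 = r ->
  M 6 = k -> M 7 = 32*m+2+3*j ->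
  exists n M', reach prog (47,M) (84,M') n /\ n <= 40*k+1 /\
    Base m L M' (efold L k j s) /\ M' 5 = r.
Proof.
elim=> [|k IH] j M s hk hj hB h5 h6 h7.
  st; jzt; fin; split=> //; by rd.
eapply ex_block.
  apply: (edge_body (j:=j) (r:=r) _ hB) => //; lia.
  lia.
move=> M1 [hB1 [h15 [h16 h17]]].
eapply ex_weak.
  apply: (IH j.+1) => //; lia.
lia.
Qed.

Lemma round_loop m L : 0 < m -> forall k M s, Base m L M s -> M 5 = k ->
  exists n M', reach prog (44,M) (86,M') n /\ n <= k*(40*m+10)+1 /\
    Base m L M' (iter k (efold L m 0) s).
Proof.
move=> hm; elim=> [|k IH] M s hB h5.
  st; jzt; fin; done.
rewrite iterSr.
have [h1 h2 h3 h4 [h13 htri hs]] := hB.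
st; jzf. st. st.
eapply ex_block.
  apply: (edge_loop (m:=m) (L:=L) (s:=s) (k:=m) (j:=0) (r:=k.+1)); try (by rd; lia).
  by split; try (by rd; lia); split; [by rd| move=> i hi; rd; exact: htri | move=> y; rd; exact: hs].
  lia.
move=> M1 [hB1 h15].
have [g1 g2 g3 g4 [g13 gtri gs]] := hB1.
st. st. jzt.
eapply ex_weak.
  apply: (IH _ (efold L m 0 s)).
  by split; try (by rd; lia); split; [by rd| move=> i hi; rd; exact: gtri | move=> y; rd; exact: gs].
  by rd; lia.
nia.
Qed.

Definition ov (s : nat -> nat) u w t := t + ((s u - (s u - s w)) - t).

Definition Out M L s j := forall j', j' < j ->
  [/\ M (25+3*j') = nth 0 (flat L) (3*j'), M (26+3*j') = nth 0 (flat L) (3*j'+1)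
    & M (27+3*j') = ov s (nth 0 (flat L) (3*j')) (nth 0 (flat L) (3*j'+1)) (nth 0 (flat L) (3*j'+2))].

Lemma out_body m L M s j : j < m -> Base m L M s -> M 6 = m - j ->
  M 7 = 32*m+2+3*j -> M 19 = 25+3*j -> Out M L s j ->
  exists n M', reach prog (89,M) (89,M') n /\ n <= 25 /\ Base m L M' s /\
    M' 6 = m - j.+1 /\ M' 7 = 32*m+2+3*j.+1 /\ M' 19 = 25+3*j.+1 /\ Out M' L s j.+1.
Proof.
move=> hj [h1 h2 h3 h4 [h13 htri hs]] h6 h7 h19 hO.
set u := nth 0 (flat L) (3*j); set w := nth 0 (flat L) (3*j+1); set t := nth 0 (flat L) (3*j+2).
have r0 : M (M 7) = u by rewrite h7 htri //; lia.
have r1 : M (M 7 + M 1) = w.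
  by rewrite h7 h1 (_ : 32*m+2+3*j+1 = 32*m+2+(3*j+1)) ?htri //; lia.
have r2 : M (M 7 + M 1 + M 1) = t.
  by rewrite h7 h1 (_ : 32*m+2+3*j+1+1 = 32*m+2+(3*j+2)) ?htri //; lia.
st. jzf. do 22 st. jzt.
fin. rewrite ?r0 ?r1 ?r2 h4 !hs.
split; last split; [|lia|].
  split; try (rd; lia); split; [by rd | move=> i hi; rd; exact: htri | move=> y; rd; exact: hs].
split; first lia. split; first lia.
move=> j' hj'.
have [->|hne] := eqVneq j' j.
  by rd; split.
have hlt : j' < j by lia.
rd. exact: hO.
Qed.



Lemma out_loop m L s : forall k j M, k = m - j -> j <= m -> Base m L M s -> M 6 = k ->
  M 7 = 32*m+2+3*j -> M 19 = 25+3*j -> Out M L s j ->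
  exists n M', reach prog (89,M) (112,M') n /\ n <= 25*k+1 /\ Base m L M' s /\ Out M' L s m.
Proof.
elim=> [|k IH] j M hk hj hB h6 h7 h19 hO.
  have e : j = m by lia. subst j.
  st; jzt; fin; by split.
eapply ex_block.
  apply: (out_body (j:=j) _ hB) => //; lia.
  lia.
move=> M1 [hB1 [h16 [h17 [h119 hO1]]]].
eapply ex_weak.
  apply: (IH j.+1) => //; lia.
lia.
Qed.

Definition otrip L s j : label :=
  (nth 0 (flat L) (3*j), nth 0 (flat L) (3*j+1),
   ov s (nth 0 (flat L) (3*j)) (nth 0 (flat L) (3*j+1)) (nth 0 (flat L) (3*j+2))).

Lemma final_blk m L M s : 0 < m -> Base m L M s -> Out M L s m ->
  exists n M', reach prog (112,M) (138,M') n /\ n <= 26 /\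
   M' 0 = m + 8 /\ forall i, i < m + 8 ->
     (M' (1+3*i), M' (2+3*i), M' (3+3*i)) = otrip L s (if i < 8 then 0 else i - 8).
Proof.
move=> hm [h1 h2 h3 h4 [h13 htri hs]] hO.
do 26 st.
fin. split; first lia.
move=> i hi.
case: ifP => hi8.
  have [e0 e1 e2] := hO 0 hm.
  rewrite /otrip -e2 -e1 -e0 !muln0 !addn0.
  do 8 (case: i hi hi8 => [|i] hi hi8; first by rd; rewrite ?h13 ?addn0).
  done.
have [e0 e1 e2] := hO (i-8) ltac:(lia).
rewrite /otrip -e2 -e1 -e0.
rd. congr (_,_,_); congr M; lia.
Qed.

Definition CI m (M0 : nat -> nat) c M :=
  [/\ M 0 = 32*m + c - 2, M 1 = 1, M 2 = m, M 3 = c & [/\ M 4 = 3*m+3-c,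
   forall i, 1 <= i < c -> M (32*m-1+i) = M0 i,
   forall i, c <= i < 3*m+3 -> M i = M0 i &
   forall a, 64*m+4 <= a -> M a = 0]].

Lemma copy_loop m M0 : 0 < m -> forall k c M, k = 3*m+3-c -> 6 <= c <= 3*m+3 -> CI m M0 c M ->
  exists n M', reach prog (21,M) (29,M') n /\ n <= 8*k+1 /\ CI m M0 (3*m+3) M'.
Proof.
move=> hm; elim=> [|k IH] c M hk hc [h0 h1 h2 h3 [h4 hcp hun hz]].
  have e : c = 3*m+3 by lia. subst c.
  st; jzt; fin; split; try lia; split; try lia; (try rewrite -e); done.
st; jzf. do 7 st. try jzt.
eapply ex_weak.
  apply: (IH c.+1); [lia|lia|].
  split; try (rd; lia). split; try (rd; lia).
  - move=> i hi; rd. have [->|hne] := eqVneq i c.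
      rd; rewrite h3 hun //; lia.
    rd. apply: hcp; lia.
  - move=> i hi; rd; apply: hun; lia.
  - move=> a ha; rd; exact: hz.
lia.
Qed.

Definition s0 (v : nat) : nat -> nat := fun y => if y == v then 1 else 0.

Ltac nrm r v := match goal with |- context [upd ?M r ?x] =>
  lazymatch x with v => fail | _ => rewrite (_ : x = v); [|lia] end end.

Lemma prelude m L v M0 : 0 < m -> M0 2 = m -> M0 1 = v ->
  (forall k, k < 3*m -> M0 (3+k) = nth 0 (flat L) k) -> (forall a, 3*m+3 <= a -> M0 a = 0) ->
  exists n M', reach prog (0,M0) (44,M') n /\ n <= 24*m + 60 /\ Base m L M' (s0 v) /\ M' 5 = 2*m+1.
Proof.
move=> hm h2 h1 htr hz.
st; jzf. do 5 st. nrm 0 (32*m). do 15 st.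
eapply ex_block.
  apply: (copy_loop (M0:=M0) hm (k:=3*m-3) (c:=6)); [lia|lia|].
  split; try (rd; lia). split; try (rd; lia).
  - move=> i hi.
    have : (i = 1) \/ (i = 2) \/ (i = 3) \/ (i = 4) \/ (i = 5) by lia.
    by case=> [->|[->|[->|[->|->]]]]; rd.
  - move=> i hi; rd; done.
  - move=> a ha; rd; apply: hz; lia.
  lia.
move=> M2 [g0 g1 g2 g3 [g4 gcp gun gz]].
have gv : M2 (32*m) = v.
  by rewrite (_ : 32*m = 32*m-1+1); [rewrite gcp //; lia | lia].
Time (st; rewrite ?g0 ?g1 ?g2 ?g3 ?g4; st; rewrite ?g0 ?g1 ?g2 ?g3 ?g4; do 4 st; try nrm 3 (32*m); st; st; try nrm 3 (32*m+2); st; try nrm 4 (64*m+4); st; try nrm 14 (32*m); rewrite ?gv).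
Time (do 5 st).
fin. rewrite ?gv ?g1 ?g2.
split; last lia.
split; try (rd; lia). split; first by rd.
- move=> i hi; rd.
  rewrite (_ : 32*m+2+i = 32*m-1+(i+3)); last lia.
  rewrite gcp; last lia.
  rewrite addnC htr //.
- move=> y; rewrite /s0; case: eqP => [->|hne]; rd; first done.
  apply: gz; lia.
Qed.


Fixpoint iswalk (L : seq label) x (p : seq (nat * nat)) y : Prop :=
  match p with
  | [::] => x = y
  | (z, t) :: p' => has_label L x z t /\ iswalk L z p' y
  end.

Fixpoint wval a (p : seq (nat * nat)) : nat :=
  match p with
  | [::] => a
  | (z, t) :: p' => wval (maxn a t).+1 p'
  end.

Lemma wval_ge a p : a <= wval a p.
Proof. elim: p a => [|[z t] p IH] a //=; apply: leq_trans (IH _); lia. Qed.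

Lemma wval_mono a b p : a <= b -> wval a p <= wval b p.
Proof. elim: p a b => [|[z t] p IH] a b //= h; apply: IH; lia. Qed.

Lemma wval_cat a p q : wval a (p ++ q) = wval (wval a p) q.
Proof. by elim: p a => [|[z t] p IH] a //=. Qed.

Lemma iswalk_cat L x p q y :
  iswalk L x (p ++ q) y <-> exists z, iswalk L x p z /\ iswalk L z q y.
Proof.
elim: p x => [|[z t] p IH] x /=.
  by split; [move=> h; exists x | move=> [z [-> h]]].
split.
  move=> [h1 /IH [z' [h2 h3]]]; exists z'; by [].
by move=> [z' [[h1 h2] h3]]; split=> //; apply/IH; exists z'.
Qed.

Lemma iswalk_rcons L x p z t y :
  iswalk L x (rcons p (z, t)) y <-> exists w, iswalk L x p w /\ has_label L w z t /\ z = y.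
Proof.
rewrite -cats1 iswalk_cat; split.
  by move=> [w [h1 /= [h2 h3]]]; exists w.
by move=> [w [h1 [h2 h3]]]; exists w.
Qed.

Lemma wval_rcons a p z t : wval a (rcons p (z, t)) = (maxn (wval a p) t).+1.
Proof. by rewrite -cats1 wval_cat. Qed.

Lemma iswalk_last L x p y : iswalk L x p y -> y = last x (map fst p).
Proof. elim: p x => [|[z t] p IH] x /=; [by []| by move=> [_ /IH]]. Qed.

Lemma relax_valE sx sz t : relax_val sx sz t =
  if sx == 0 then sz else if sz == 0 then (maxn sx t).+1 else minn sz (maxn sx t).+1.
Proof.
rewrite /relax_val; case: eqP => // _; case: eqP => _ //=; lia.
Qed.

Section Alg.
Variable L : seq label.
Variable v : nat.

Definition rs s (l : label) := rstep3 s l.1.1 l.1.2 l.2.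
Definition round s := foldl rs s L.

Definition Sound (s : nat -> nat) :=
  forall y, s y != 0 -> exists p, iswalk L v p y /\ wval 1 p <= s y.

Lemma sound_relax s x z t : has_label L x z t -> Sound s -> Sound (relaxF s x z t).
Proof.
move=> hl hs y; rewrite /relaxF /=; case: (y =P z) => [->|_]; last exact: hs.
rewrite relax_valE.
case: (s x =P 0) => hx; first exact: hs.
have [p [hp hw]] := hs x (introN eqP hx).
have hx' : exists q, iswalk L v q z /\ wval 1 q <= (maxn (s x) t).+1.
  exists (rcons p (z, t)); split.
    by apply/iswalk_rcons; exists x.
  rewrite wval_rcons; lia.
case: (s z =P 0) => hz _; first exact: hx'.
have [q [hq hw']] := hs z (introN eqP hz).
case: (leqP (s z) (maxn (s x) t).+1) => hc.
  exists q; split => //; lia.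
have [q' [h1 h2]] := hx'; exists q'; split => //; lia.
Qed.

Lemma sound_round s : Sound s -> Sound (round s).
Proof.
rewrite /round; have : {subset L <= L} by [].
elim: {1 3}L s => [|l ls IH] s //= hsub hs.
apply: IH; first by move=> x hx; apply: hsub; rewrite inE hx orbT.
have hl : l \in L by apply: hsub; rewrite inE eqxx.
case: l hl {hsub} => [[u w] t] hl.
apply: sound_relax; first by right.
by apply: sound_relax => //; left.
Qed.

(* le-infinity : a <=oo b *)
Definition lei a b := b = 0 \/ (a != 0 /\ a <= b).

Lemma lei_relax s x z t y : lei (relaxF s x z t y) (s y).
Proof.
rewrite /lei /relaxF /=; case: (y =P z) => [->|_]; last lia.
rewrite relax_valE; case: (s z =P 0) => hz; first by left.
right; case: (s x =P 0) => hx; lia.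
Qed.

Lemma lei_trans a b c : lei a b -> lei b c -> lei a c.
Proof. rewrite /lei; lia. Qed.

Lemma lei_rs s l y : lei (rs s l y) (s y).
Proof. exact: lei_trans (lei_relax _ _ _ _ _) (lei_relax _ _ _ _ _). Qed.

Lemma rv_le sx sz t : sx != 0 -> relax_val sx sz t != 0 /\ relax_val sx sz t <= (maxn sx t).+1.
Proof. rewrite relax_valE => /negbTE ->; case: (sz =P 0) => h; lia. Qed.

Lemma lei_nz a b : lei a b -> b != 0 -> a != 0 /\ a <= b.
Proof. rewrite /lei; lia. Qed.

Lemma fold_prop (ls : seq label) s :
  (forall y, lei (foldl rs s ls y) (s y)) /\
  (forall x z t, has_label ls x z t -> s x != 0 ->
     foldl rs s ls z != 0 /\ foldl rs s ls z <= (maxn (s x) t).+1).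
Proof.
elim: ls s => [|l ls IH] s /=.
  split; first by move=> y; rewrite /lei; lia.
  by move=> x z t; rewrite /has_label !in_nil; case.
have [IHa IHb] := IH (rs s l).
split; first by move=> y; exact: lei_trans (IHa y) (lei_rs _ _ _).
move=> x z t hl hx.
have key : rs s l z != 0 /\ rs s l z <= (maxn (s x) t).+1 ->
    foldl rs (rs s l) ls z != 0 /\ foldl rs (rs s l) ls z <= (maxn (s x) t).+1.
  move=> [h1 h2]; have := lei_nz (IHa z) h1; lia.
have [e|[e|hl']] : l = (x, z, t) \/ l = (z, x, t) \/ has_label ls x z t.
- case: hl => h; rewrite inE in h; case/orP: h => [/eqP <-|h].
  + by left.
  + by right; right; left.
  + by right; left.
  + by right; right; right.
- apply: key; subst l; rewrite /rs /rstep3 /=.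
  have [h1 h2] := rv_le (s z) t hx.
  have h3 : relaxF s x z t z = relax_val (s x) (s z) t by rewrite /relaxF eqxx.
  have hz : relaxF s x z t z != 0 by rewrite h3.
  have [h4 h5] := lei_nz (lei_relax (relaxF s x z t) z x t z) hz.
  split => //; lia.
- apply: key; subst l; rewrite /rs /rstep3 /=.
  have [h1 h2] := lei_nz (lei_relax s z x t x) hx.
  have [h3 h4] := rv_le (relaxF s z x t z) t h1.
  rewrite {1 3}/relaxF eqxx; split => //; apply: leq_trans h4 _; lia.
- have [h1 h2] := IHb x z t hl' (proj1 (lei_nz (lei_rs s l x) hx)).
  split => //; apply: leq_trans h2 _; have := lei_nz (lei_rs s l x) hx; lia.
Qed.
End Alg.

Section Alg2.
Variable L : seq label.
Variable v : nat.

Definition Comp R (s : nat -> nat) :=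
  forall p y, iswalk L v p y -> size p <= R -> s y != 0 /\ s y <= wval 1 p.

Lemma comp_round R s : Comp R s -> Comp R.+1 (round L s).
Proof.
move=> hc p y hp hsz.
have [ha hb] := fold_prop L s.
case: (lastP p) hp hsz => [|p' [z t]] hp hsz.
  have [h1 h2] := hc [::] y hp isT.
  have := lei_nz (ha y) h1; rewrite /round; lia.
move/iswalk_rcons: hp => [x [hp' [hl ez]]]; subst z.
rewrite size_rcons ltnS in hsz.
have [h1 h2] := hc p' x hp' hsz.
have [h3 h4] := hb x y t hl h1.
rewrite /round; split => //; rewrite wval_rcons; apply: leq_trans h4 _; lia.
Qed.


Lemma comp0 : Comp 0 (s0 v).
Proof.
move=> [|[z t] p] y /= hp hs //; subst y; by rewrite /s0 eqxx; split.
Qed.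

Lemma sound0 : Sound L v (s0 v).
Proof.
move=> y; rewrite /s0; case: (y =P v) => [->|_] //= _; by exists [::].
Qed.

Lemma comp_iter k : Comp k (iter k (round L) (s0 v)).
Proof. elim: k => [|k IH]; [exact: comp0 | exact: comp_round]. Qed.

Lemma sound_iter k : Sound L v (iter k (round L) (s0 v)).
Proof. elim: k => [|k IH]; [exact: sound0 | exact: sound_round]. Qed.

Definition endp := flatten [seq [:: l.1.1; l.1.2] | l <- L].

Lemma size_endp : size endp = 2 * size L.
Proof. rewrite /endp; elim: L => [|l ls IH] //=; rewrite IH; lia. Qed.

Lemma has_label_endp x z t : has_label L x z t -> z \in endp.
Proof.
rewrite /endp => -[] h; apply/flattenP.
  by exists [:: x; z]; [apply/mapP; exists (x, z, t) | rewrite !inE eqxx orbT].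
by exists [:: z; x]; [apply/mapP; exists (z, x, t) | rewrite !inE eqxx].
Qed.

Lemma walk_verts x p y : iswalk L x p y -> {subset map fst p <= endp}.
Proof.
elim: p x => [|[z t] p IH] x //= [hl hp] w; rewrite inE => /orP [/eqP ->|h].
  exact: has_label_endp hl.
exact: IH hp _ h.
Qed.

Lemma last_take T (x : T) s k : k <= size s -> last x (take k s) = nth x (x :: s) k.
Proof.
elim: s x k => [|a s IH] x [|k] //= hk; rewrite IH //.
case: k hk => //= k hk; apply: set_nth_default; lia.
Qed.

Lemma short p y : iswalk L v p y ->
  exists q, [/\ iswalk L v q y, wval 1 q <= wval 1 p & size q <= 2 * size L].
Proof.
elim: {p}(size p) {-2}p (leqnn (size p)) => [|N IH] p hN hp.
  by exists p; split => //; lia.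
case: (leqP (size p) (2 * size L)) => hsz; first by exists p.
have hnu : ~~ uniq (v :: map fst p).
  apply/negP => hu.
  have := uniq_leq_size hu (s2 := v :: endp).
  have : {subset v :: map fst p <= v :: endp}.
    move=> w; rewrite !inE => /orP [->//|h]; by rewrite (walk_verts hp h) orbT.
  move=> hs /(_ hs) /=; rewrite size_map size_endp; lia.
have [i [j [hij hj he]]] := uniqPn v hnu.
move: hj; rewrite /= size_map ltnS => hj.
set a := nth v (v :: map fst p) i.
have ep : p = take i p ++ (take (j - i) (drop i p) ++ drop (j - i) (drop i p)).
  by rewrite !cat_take_drop.
move: (hp); rewrite ep => /iswalk_cat [a1 [h1 /iswalk_cat [a2 [h2 h3]]]].
have ea1 : a1 = a.
  by rewrite (iswalk_last h1) map_take last_take // size_map; lia.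
have ea2 : a2 = a.
  rewrite (iswalk_last h2) map_take last_take ?size_map ?size_drop; last lia.
  rewrite -[j - i]prednK; last lia.
  rewrite /= map_drop nth_drop (set_nth_default v); last by rewrite size_map; lia.
  rewrite /a he; case: j hij hj {he ep h2 h3} => [|j] hij hj //=.
  congr nth; lia.
set q := take i p ++ drop (j - i) (drop i p).
have hq : iswalk L v q y.
  by apply/iswalk_cat; exists a; split; [rewrite -ea1 | rewrite -ea2].
have hqs : size q <= N.
  rewrite /q size_cat size_take !size_drop (_ : (i < size p) = true); [lia|apply/idP; lia].
have [q' [h1' h2' h3']] := IH q hqs hq.
exists q'; split => //; apply: leq_trans h2' _.
rewrite {2}ep /q !wval_cat; apply: wval_mono; exact: wval_ge.
Qed.
End Alg2.

Section Fin.
Variable L : seq label.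
Variable v : nat.
Definition sF := iter (2 * size L).+1 (round L) (s0 v).

Lemma opt p y : iswalk L v p y -> sF y != 0 /\ sF y <= wval 1 p.
Proof.
move=> hp; have [q [hq hw hs]] := short hp.
have [h1 h2] := comp_iter (k:=(2 * size L).+1) hq (leqW hs).
split => //; exact: leq_trans h2 hw.
Qed.

Lemma fixpt x z t : has_label L x z t -> sF x != 0 -> sF z <= (maxn (sF x) t).+1.
Proof.
rewrite /sF => hl hx; have [p [hp hw]] := sound_iter (L:=L) (v:=v) (k:=(2 * size L).+1) (y:=x) hx.
have hq : iswalk L v (rcons p (z, t)) z by apply/iswalk_rcons; exists x.
have [_ h] := opt hq; apply: leq_trans h _; rewrite wval_rcons; lia.
Qed.

Lemma witness y : y != v -> sF y != 0 ->
  exists x t, [/\ has_label L x y t, sF x != 0 & sF y = (maxn (sF x) t).+1].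
Proof.
rewrite /sF => hyv hy; have [p [hp hw]] := sound_iter (L:=L) (v:=v) (k:=(2 * size L).+1) (y:=y) hy.
case: (lastP p) hp hw => [|p' [z t]]; first by move=> /= e; rewrite e eqxx in hyv.
move=> /iswalk_rcons [x [hp' [hl ez]]]; subst z; rewrite wval_rcons => hw.
have [h1 h2] := opt hp'.
exists x, t; split => //.
have := fixpt hl h1; rewrite /sF in h1 h2 *; lia.
Qed.

Lemma sFv : sF v = 1.
Proof.
have [h1 h2] := opt (p := [::]) (y := v) erefl.
move: h1 h2 => /=; lia.
Qed.
End Fin.

Lemma has_label_delayed L L2 x z t' : delayed_from L L2 -> has_label L2 x z t' ->
  exists t, t <= t' /\ has_label L x z t.
Proof.
move=> [d hd] hl.
have H : forall a b, (a, b, t') \in L2 -> exists t, t <= t' /\ (a, b, t) \in L.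
  move=> a b; rewrite hd => /mapP [[[a' b'] c] hin [-> -> ->]] /=.
  by exists c; split => //; apply: leq_addr.
case: hl => /H [t [h1 h2]]; exists t; split => //; by [left|right].
Qed.

Lemma lower L L2 : delayed_from L L2 -> forall p x prev y a,
  is_tpath L2 x prev p y -> a <= prev.+1 ->
  exists q, iswalk L x q y /\ wval a q <= (last prev (map snd p)).+1.
Proof.
move=> hd; elim=> [|[z t'] p IH] x prev y a /=.
  by move=> -> ha; exists [::].
move=> [hl hlt hp] ha.
have [t [htt hl']] := has_label_delayed hd hl.
have [q [hq hw]] := IH z t' y (maxn a t).+1 hp ltac:(lia).
by exists ((z, t) :: q).
Qed.

Lemma tpath_rcons L x prev p y z t : is_tpath L x prev p y -> has_label L y z t ->
  last prev (map snd p) < t -> is_tpath L x prev (rcons p (z, t)) z.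
Proof.
elim: p x prev => [|[w t'] p IH] x prev /=.
  by move=> -> hl ht.
by move=> [h1 h2 h3] hl ht; split => //; apply: IH.
Qed.

Section Up.
Variable L : seq label.
Variable v : nat.
Definition gout (l : label) : label := (l.1.1, l.1.2, ov (sF L v) l.1.1 l.1.2 l.2).
Definition Lo := map gout L.

Lemma upper y : sF L v y != 0 ->
  exists p, is_tpath Lo v 0 p y /\ arrival p <= (sF L v y).-1.
Proof.
move: {2}(sF L v y) (leqnn (sF L v y)) => N; elim: N y => [|N IH] y hN hy.
  move: hy hN; lia.
case: (eqVneq y v) => [->|hyv]; first by exists [::].
have [x [t [hl hx e]]] := witness hyv hy.
have [p [hp ha]] := IH x ltac:(lia) hx.
exists (rcons p (y, (sF L v y).-1)); split.
  apply: (tpath_rcons hp); last by move: ha; rewrite /arrival; lia.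
  rewrite /has_label; case: hl => h; [left|right]; apply/mapP; [exists (x, y, t) | exists (y, x, t)] => //=;
  rewrite /gout /ov /=; congr (_,_,_); lia.
by rewrite /arrival map_rcons last_rcons.
Qed.
End Up.

Lemma tpath_eqi L1 L2 x prev p y : L1 =i L2 -> is_tpath L1 x prev p y -> is_tpath L2 x prev p y.
Proof.
move=> e; elim: p x prev => [|[z t] p IH] x prev //= [h1 h2 h3]; split => //; last exact: IH.
by rewrite /has_label -!e.
Qed.

Lemma main_math n L v Lout : Lout =i Lo L v ->
  (exists L', reachfast_solution n L v L') -> reachfast_optimal n L v Lout.
Proof.
move=> eo [L2 [hd2 [T hT]]].
set s := sF L v.
have hdel : delayed_from L Lout.
  exists (fun l => ov s l.1.1 l.1.2 l.2 - l.2) => x; rewrite eo /Lo.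
  congr (x \in _); apply: eq_map => l; rewrite /gout /ov; rewrite -/s; congr (_,_,_); lia.
have lowb : forall L3 t3, delayed_from L L3 -> reaches_all_by n L3 v t3 ->
    forall y, y < n -> s y != 0 /\ (s y).-1 <= t3.
  move=> L3 t3 hd3 hr y hy; have [p [hp ha]] := hr y hy.
  have [q [hq hw]] := lower hd3 hp (isT : 1 <= 1).
  have [h1 h2] := opt hq; rewrite /s; split => //; move: ha; rewrite /arrival; lia.
set Ts := \max_(y < n) (s y).-1.
have hreach : reaches_all_by n Lout v Ts.
  move=> y hy; have [h1 _] := lowb L2 T hd2 hT y hy.
  have [p [hp ha]] := upper h1.
  exists p; split; first exact: tpath_eqi hp.
  apply: leq_trans ha _; exact: (leq_bigmax_cond (Ordinal hy)).
have minT : forall L3 t3, delayed_from L L3 -> reaches_all_by n L3 v t3 -> Ts <= t3.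
  move=> L3 t3 hd3 hr; apply/bigmax_leqP => y _.
  exact: (lowb L3 t3 hd3 hr y (ltn_ord y)).2.
split; first by split => //; exists Ts.
exists Ts; split; first by split => // t' ht'; exact: minT hdel ht'.
move=> L'' t'' [hd'' _] [hr'' _]; exact: minT hd'' hr''.
Qed.

Definition bnd m := (24*m + 60) + ((2*m+1)*(40*m+10)+1) + 3 + (25*m+1) + 26.

Lemma run_all n v L : 0 < size L ->
  exists k Mf, reach prog (init_state (encode_instance n v L)) (138, Mf) k /\ k <= bnd (size L) /\
   Mf 0 = size L + 8 /\ forall i, i < size L + 8 ->
     (Mf (1+3*i), Mf (2+3*i), Mf (3+3*i)) =
       otrip L (iter (2*size L+1) (efold L (size L) 0) (s0 v)) (if i < 8 then 0 else i - 8).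
Proof.
move=> hm.
have hsz : size (flat L) = 3 * size L.
  rewrite /flat; elim: (L) => [|l ls IH] //=; rewrite IH; lia.
set m := size L in hm hsz *.
eapply ex_block.
  apply: (prelude (m:=m) (L:=L) (v:=v)) => //.
  - move=> a ha; rewrite /= nth_default //= hsz; lia.
  - rewrite /bnd; lia.
move=> M1 [hB1 h5].
eapply ex_block.
  apply: (round_loop hm hB1 h5).
  rewrite /bnd; lia.
move=> M2 hB2; rewrite /bnd.
have [g1 g2 g3 g4 [g13 gtri gs]] := hB2.
st. st. st.
eapply ex_block.
  apply: (out_loop (m:=m) (L:=L) (s:=iter (2 * m + 1) (efold L m 0) (s0 v)) (k:=m) (j:=0)); try (by rd; lia).
  by split; try (by rd; lia); split; [by rd| move=> i hi; rd; exact: gtri | move=> y; rd; exact: gs].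
  by move=> j'; rewrite ltn0.
  rewrite /bnd; nia.
move=> M3 [hB3 hO3].
eapply ex_weak.
  apply: (final_blk hm hB3 hO3).
rewrite /bnd; nia.
Qed.

Lemma nth_flat_cons l L i : nth 0 (flat (l :: L)) (3 + i) = nth 0 (flat L) i.
Proof. by []. Qed.

Lemma efoldS L k j s : efold L k.+1 j s = efold L k j.+1
      (rstep3 s (nth 0 (flat L) (3*j)) (nth 0 (flat L) (3*j+1)) (nth 0 (flat L) (3*j+2))).
Proof. by []. Qed.

Lemma nfc0 l L j : nth 0 (flat (l :: L)) (3 * j.+1) = nth 0 (flat L) (3 * j).
Proof. by rewrite mulnS. Qed.
Lemma nfcf l L j f : nth 0 (flat (l :: L)) (3 * j.+1 + f) = nth 0 (flat L) (3 * j + f).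
Proof. by rewrite mulnS -addnA. Qed.

Lemma efold_cons l L k j s : efold (l :: L) k j.+1 s = efold L k j s.
Proof.
elim: k j s => [|k IH] j s //.
by rewrite !efoldS IH nfc0 !nfcf.
Qed.

Lemma efold_round L s : efold L (size L) 0 s = round L s.
Proof.
rewrite /round; elim: L s => [|l L IH] s //.
by change (size (l :: L)) with (size L).+1; rewrite efoldS efold_cons IH.
Qed.

Lemma nth_flat L j : j < size L ->
  [/\ nth 0 (flat L) (3*j) = (nth (0,0,0) L j).1.1,
      nth 0 (flat L) (3*j+1) = (nth (0,0,0) L j).1.2 &
      nth 0 (flat L) (3*j+2) = (nth (0,0,0) L j).2].
Proof.
elim: L j => [|l L IH] [|j] hj; [by []|by []|by split|].
have [h1 h2 h3] := IH j hj.
by rewrite nfc0 !nfcf.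
Qed.

Lemma otrip_gout L v j : j < size L ->
  otrip L (sF L v) j = gout L v (nth (0,0,0) L j).
Proof. by move=> hj; have [h1 h2 h3] := nth_flat hj; rewrite /otrip /gout h1 h2 h3. Qed.

Lemma sF_eq L v : iter (2 * size L + 1) (efold L (size L) 0) (s0 v) = sF L v.
Proof.
rewrite /sF addn1; elim: (2 * size L).+1 => //= k ->; by rewrite efold_round.
Qed.

Lemma input_size_ge s : size s <= input_size s.
Proof. rewrite /input_size -sum1_size; exact: leq_sum. Qed.

Lemma size_enc n v L : size (encode_instance n v L) = 3 + 3 * size L.
Proof. rewrite /encode_instance /=; elim: L => [|l L IH] //=; lia. Qed.

Lemma decode_ok L v Mf : 0 < size L -> Mf 0 = size L + 8 ->
  (forall i, i < size L + 8 ->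
     (Mf (1+3*i), Mf (2+3*i), Mf (3+3*i)) =
       otrip L (iter (2*size L+1) (efold L (size L) 0) (s0 v)) (if i < 8 then 0 else i - 8)) ->
  decode_output Mf =i Lo L v.
Proof.
move=> hm h0 hi x; rewrite /decode_output h0.
have e : [seq (Mf (1 + 3 * j), Mf (2 + 3 * j), Mf (3 + 3 * j)) | j <- iota 0 (size L + 8)] =
   map (fun i => otrip L (sF L v) (if i < 8 then 0 else i - 8)) (iota 0 (size L + 8)).
  by apply/eq_in_map => i; rewrite mem_iota /= => hin; rewrite hi ?sF_eq //.
rewrite e.
apply/mapP/mapP.
  move=> [i hin ->]; move: hin; rewrite mem_iota /= => hin.
  have hidx : (if i < 8 then 0 else i - 8) < size L by case: ifP => _; lia.
  exists (nth (0,0,0) L (if i < 8 then 0 else i - 8)); first exact: mem_nth.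
  exact: otrip_gout.
move=> [l hl ->].
exists (index l L + 8); first by move: hl; rewrite -index_mem mem_iota /= add0n ltn_add2r.
rewrite ifN; last lia.
by rewrite addnK otrip_gout ?index_mem // nth_index.
Qed.

Theorem theorem2 :
  exists (P : seq instr) (c k : nat),
    forall (n v : nat) (L : seq label),
      wf_tgraph n L -> v < n ->
      exists M : nat -> nat,
        exec P (c * (input_size (encode_instance n v L)).+1 ^ k)
             (init_state (encode_instance n v L)) = Some M /\
        ((exists L', reachfast_solution n L v L') ->
         reachfast_optimal n L v (decode_output M)).
Proof.
exists prog, 1000, 2 => n v L _ _.
have hS := input_size_ge (encode_instance n v L); rewrite size_enc in hS.
set S := input_size _ in hS *.
case: (posnP (size L)) => hm.
  move/size0nil: hm => eL; subst L.
  exists (upd (init_state (encode_instance n v [::])).2 0 0); split.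
    have r : reach prog (init_state (encode_instance n v [::]))
       (140, upd (init_state (encode_instance n v [::])).2 0 0) 2 by [].
    rewrite (_ : 1000 * S.+1 ^ 2 = 2 + (1000 * S.+1 ^ 2 - 3).+1); last by nia.
    by rewrite (exec_reach _ r).
  move=> hsol; apply: main_math hsol => x.
  by rewrite /decode_output upd_eq.
have [k [Mf [r [hk [h0 hi]]]]] := run_all n v hm.
exists Mf; split.
  rewrite (_ : 1000 * S.+1 ^ 2 = k + (1000 * S.+1 ^ 2 - k - 1).+1); last by move: hk; rewrite /bnd; nia.
  by rewrite (exec_reach _ r).
move=> hsol; apply: main_math hsol; exact: decode_ok.
Qed.
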